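(* Let $\mathbb{X},\mathbb{Y}$ be smooth real Banach spaces and let $T\in\mathbb{L}(\mathbb{X},\mathbb{Y})$ with $\operatorname{rank} T>1$ and $\|T\|=1$. Suppose $M_T\neq\emptyset$ and $x\in M_T$. Then $(x,Tx)$ is a weak CPP.
   Context: All Banach spaces are real and of dimension greater than $1$. $\mathbb{L}(\mathbb{X},\mathbb{Y})$ is the space of bounded linear operators with operator norm. $M_T=\{x\in S_{\mathbb{X}}:\|Tx\|=\|T\|\}$. $B(x,r)=\{u:\|u-x\|<r\}$. $x\perp_B y$ means $\|x+\lambda y\|\ge\|x\|$ for all real $\lambda$; $x^\perp=\{y: x\perp_B y\}$. For $x\in S_{\mathbb{X}}$, $y\in S_{\mathbb{Y}}$, $(x,y)$ is a weak CPP if there exist $z\in x^\perp\cap S_{\mathbb{X}}$, $w\in y^\perp\cap S_{\mathbb{Y}}$, $r>0$, $\mu>0$ such that for all $a,b\in\mathbb{R}$, $ax+bz\in B(x,r)\cap S_{\mathbb{X}}$ implies $\|ay+b\mu w\|\le1$. *)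

(* Defs.v *)
From HB Require Import structures.
From mathcomp Require Import all_boot all_order all_algebra.
From mathcomp Require Import all_classical all_reals all_analysis.
Set Implicit Arguments. Unset Strict Implicit. Unset Printing Implicit Defensive.
Import Order.TTheory GRing.Theory Num.Theory.
Import numFieldNormedType.Exports.
Local Open Scope classical_set_scope.
Local Open Scope ring_scope.

Section Defs.
Context {R : realType}.

Definition unit_sphere (X : normedModType R) : set X := [set x | `|x| = 1].

Arguments unit_sphere : clear implicits.

Definition bounded_linear (X Y : normedModType R) (T : {linear X -> Y}) : Prop :=
  continuous T.

Definition opnorm (X Y : normedModType R) (T : X -> Y) : R :=
  sup [set `|T x| | x in unit_sphere X].

Definition norm_attainment_set (X Y : normedModType R) (T : X -> Y) : set X :=
  [set x | unit_sphere X x /\ `|T x| = opnorm T].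

Definition BJ_orth (X : normedModType R) (x y : X) : Prop :=
  forall lambda : R, `|x| <= `|x + lambda *: y|.

Definition rank_gt1 (X Y : normedModType R) (T : X -> Y) : Prop :=
  exists u v : X, forall a b : R, a *: T u + b *: T v = 0 -> a = 0 /\ b = 0.

Definition smooth_space (X : normedModType R) : Prop :=
  forall x : X, `|x| = 1 ->
    exists f : {linear X -> R^o},
      [/\ continuous f, opnorm f = 1, f x = 1 &
        forall g : {linear X -> R^o},
          continuous g -> opnorm g = 1 -> g x = 1 -> forall u, g u = f u].

Definition weak_CPP (X Y : normedModType R) (x : X) (y : Y) : Prop :=
  exists (z : X) (w : Y) (r mu : R),
    [/\ BJ_orth x z /\ `|z| = 1, BJ_orth y w /\ `|w| = 1, 0 < r, 0 < mu &
      forall a b : R,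
        `|a *: x + b *: z - x| < r -> `|a *: x + b *: z| = 1 ->
        `|a *: y + (b * mu) *: w| <= 1].

End Defs.

(* Main.v *)
Require Import Defs.
From HB Require Import structures.
From mathcomp Require Import all_boot all_order all_algebra.
From mathcomp Require Import all_classical all_reals all_analysis.
Import Order.TTheory GRing.Theory Num.Theory.
Import numFieldNormedType.Exports.
Local Open Scope classical_set_scope.
Local Open Scope ring_scope.
Set Implicit Arguments. Unset Strict Implicit.

Section H.
Variables (R : realType) (X Y : normedModType R).

Lemma lin_bound (f : {linear X -> Y}) : continuous f ->
  exists k : R, forall y, `|f y| <= k * `|y|.
Proof.
move=> /linear_bounded_continuous /linear_boundedP [M [_ HM]].
by exists (M + 1); apply: HM; rewrite ltrDl.
Qed.

Lemma opnorm_le (f : {linear X -> Y}) : continuous f ->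
  forall y, `|f y| <= opnorm f * `|y|.
Proof.
move=> cf y; have [k hk] := lin_bound cf.
have [->|y0] := eqVneq y 0; first by rewrite linear0 !normr0 mulr0.
have ny : `|y| > 0 by rewrite normr_gt0.
have : `|f (`|y|^-1 *: y)| <= opnorm f.
  apply: ub_le_sup.
    exists k => _ [t /= tn <-]; by rewrite -[k]mulr1 -tn hk.
  exists (`|y|^-1 *: y) => //=.
  by rewrite /unit_sphere /= normrZ normfV normr_id mulVf // gt_eqF.
rewrite linearZZ normrZ normfV normr_id ler_pdivrMl //.
by rewrite mulrC.
Qed.

Lemma normalize1 (y : X) : y != 0 -> `| (`|y|^-1) *: y| = 1.
Proof. by move=> y0; rewrite normrZ normfV normr_id mulVf // normr_eq0. Qed.

End H.

Unset Implicit Arguments.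

Theorem mainTheorem2 (R : realType) (X Y : completeNormedModType R)
  (T : {linear X -> Y}) (x : X) :
  smooth_space X -> smooth_space Y ->
  bounded_linear T -> rank_gt1 T -> opnorm T = 1 ->
  norm_attainment_set T x ->
  weak_CPP x (T x).
Proof.
move=> sX sY cT [u [v indep]] nT [xs Txn].
have xn : `|x| = 1 by exact: xs.
have Tx1 : `|T x| = 1 by rewrite Txn.
have [f [cf nf fx1 funi]] := sX x xn.
have [g [cg ng gTx guni]] := sY (T x) Tx1.
have opT t : `|T t| <= `|t| by rewrite -[`|t|]mul1r -nT opnorm_le.
have opf t : `|f t| <= `|t| by rewrite -[`|t|]mul1r -nf opnorm_le.
have opg t : `|g t| <= `|t| by rewrite -[`|t|]mul1r -ng opnorm_le.
have cgT : continuous (g \o T).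
  by move=> t; apply: continuous_comp; [apply: cT | apply: cg].
have hgT t : g (T t) = f t.
  have := funi (g \o T) cgT _ gTx t; apply.
  have ub : ubound [set `|(g \o T) t| | t in unit_sphere (X:=X)] 1.
    move=> _ [s /= sn <-]; rewrite -sn; exact: le_trans (opg _) (opT _).
  apply/eqP; rewrite eq_le; apply/andP; split.
    by apply: ge_sup => //; exists `|(g \o T) x|, x.
  have h1 : `|(g \o T) x| <= opnorm (g \o T).
    by apply: ub_le_sup; [exists 1 | exists x].
  by rewrite /= gTx normr1 in h1.
have key z' : f z' = 0 -> T z' != 0 -> weak_CPP x (T x).
  move=> fz Tz0.
  have z0 : z' != 0 by apply: contraNneq Tz0 => ->; rewrite linear0.
  pose z := `|z'|^-1 *: z'.
  have fz0 : f z = 0.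
    by rewrite /z linearZZ fz ?mulr0 ?scaler0.
  have Tz : T z != 0.
    by rewrite /z linearZZ scaler_eq0 negb_or invr_eq0 normr_eq0 z0.
  have nTz : 0 < `|T z| by rewrite normr_gt0.
  rewrite /weak_CPP; exists z, (`|T z|^-1 *: T z), 1, `|T z|; split.
  - split; last exact: normalize1.
    move=> l; rewrite xn.
    have : f (x + l *: z) = 1 by rewrite linearD linearZZ fz0 ?mulr0 ?scaler0 addr0.
    by move=> <-; apply: le_trans (opf _); rewrite ler_norm.
  - split; last exact: normalize1.
    move=> l; rewrite Tx1.
    have : g (T x + l *: (`|T z|^-1 *: T z)) = 1.
      by rewrite linearD linearZZ linearZZ (hgT z) fz0 gTx !scaler0 addr0.
    by move=> <-; apply: le_trans (opg _); rewrite ler_norm.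
  - exact: ltr01.
  - exact: nTz.
  - move=> a b _ n1.
    rewrite scalerA -mulrA mulfV ?gt_eqF // mulr1.
    have e : T (a *: x + b *: z) = a *: T x + b *: T z.
      by rewrite linearD linearZZ linearZZ.
    by rewrite -e -n1 opT.
have fK t : f (t - f t *: x) = 0.
  by rewrite linearB linearZZ fx1 /= ?mulr1 ?scaler1 subrr.
have [Tu0|Tu0] := eqVneq (T (u - f u *: x)) 0; last exact: key _ (fK u) Tu0.
have [Tv0|Tv0] := eqVneq (T (v - f v *: x)) 0; last exact: key _ (fK v) Tv0.
move/eqP: Tu0; rewrite linearB /= subr_eq0 linearZZ => /eqP eu.
move/eqP: Tv0; rewrite linearB /= subr_eq0 linearZZ => /eqP ev.
have [h1 h2] : f v = 0 /\ - f u = 0.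
  apply: indep; rewrite eu ev !scalerA mulrC mulNr scaleNr subrr //.
have [h3 _] : (1 : R) = 0 /\ (0 : R) = 0.
  have fu0 : f u = 0 by rewrite -[f u]opprK h2 oppr0.
  by apply: indep; rewrite scale1r eu fu0 !scale0r addr0.
by move: (@oner_neq0 R); rewrite h3 eqxx.
Qed.
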